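(* Let $j \geq 2$ be an integer and let $(S^{2j}, g)$ be the standard $2j$-dimensional round sphere of constant sectional curvature $1$. Then even, $G_t$-invariant complex measures on the unit tangent bundle $S(S^{2j})$ are not determined by their projection to $S^{2j}$: there exist two distinct even, $G_t$-invariant complex measures on $S(S^{2j})$ with the same projection to $S^{2j}$. In particular, there exists a non-zero, even, $G_t$-invariant finite real (signed) measure $\mu$ on $S(S^{2j})$ whose projection to $S^{2j}$ is zero, i.e. $\mu(\pi^{-1}(A)) = 0$ for every Borel set $A \subseteq S^{2j}$. *)

(* Defs.v *)
From HB Require Import structures.
From mathcomp Require Import all_boot all_order all_algebra.
From mathcomp Require Import all_classical all_reals all_analysis.
Set Implicit Arguments. Unset Strict Implicit. Unset Printing Implicit Defensive.
Import Order.TTheory GRing.Theory Num.Theory.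
Local Open Scope classical_set_scope.
Local Open Scope ring_scope.

(* Ambient Euclidean space R^N modelled as N.-tuple R (product Borel sigma-algebra,
   which is the Borel sigma-algebra of R^N). Points of the tangent bundle
   T R^N = R^N x R^N are pairs (x, v). *)
Section defs.
Variable R : realType.
Variable N : nat.

Definition edot (x y : N.-tuple R) : R := \sum_(i < N) tnth x i * tnth y i.

Definition sphere : set (N.-tuple R) := [set x | edot x x = 1].

Definition unit_tangent_bundle : set (N.-tuple R * N.-tuple R) :=
  [set p | edot p.1 p.1 = 1 /\ edot p.2 p.2 = 1 /\ edot p.1 p.2 = 0].

Definition geodesic_flow (t : R) (p : N.-tuple R * N.-tuple R)
  : N.-tuple R * N.-tuple R :=
  ([tuple cos t * tnth p.1 i + sin t * tnth p.2 i | i < N],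
   [tuple - sin t * tnth p.1 i + cos t * tnth p.2 i | i < N]).

Definition flip_dir (p : N.-tuple R * N.-tuple R) : N.-tuple R * N.-tuple R :=
  (p.1, [tuple - tnth p.2 i | i < N]).

Definition footpoint (p : N.-tuple R * N.-tuple R) : N.-tuple R := p.1.

(* A finite signed (real) measure on S(S^(N-1)) is represented as a charge on the
   ambient Borel space R^N x R^N that vanishes on every Borel set disjoint from
   the (closed) set S(S^(N-1)). *)
Definition supported_on_UTB (mu : set (N.-tuple R * N.-tuple R) -> \bar R) : Prop :=
  forall A, measurable A -> A `&` unit_tangent_bundle = set0 -> mu A = 0%E.

Definition even_measure (mu : set (N.-tuple R * N.-tuple R) -> \bar R) : Prop :=
  forall A, measurable A -> mu (flip_dir @^-1` A) = mu A.

Definition flow_invariant (mu : set (N.-tuple R * N.-tuple R) -> \bar R) : Prop :=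
  forall (t : R) A, measurable A -> mu (geodesic_flow t @^-1` A) = mu A.

Definition projection (mu : set (N.-tuple R * N.-tuple R) -> \bar R)
  (A : set (N.-tuple R)) : \bar R := mu (footpoint @^-1` A).

Definition even_invariant_UTB_measure (mu : set (N.-tuple R * N.-tuple R) -> \bar R)
  : Prop := supported_on_UTB mu /\ even_measure mu /\ flow_invariant mu.

(* Complex measures are represented by their real and imaginary parts,
   a pair of finite signed measures (charges). *)
Definition cmeasure :=
  ({charge set (N.-tuple R * N.-tuple R) -> \bar R} *
   {charge set (N.-tuple R * N.-tuple R) -> \bar R})%type.

Definition even_invariant_UTB_cmeasure (m : cmeasure) : Prop :=
  even_invariant_UTB_measure m.1 /\ even_invariant_UTB_measure m.2.

Definition cmeasure_distinct (m1 m2 : cmeasure) : Prop :=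
  exists A, measurable A /\ (m1.1 A <> m2.1 A \/ m1.2 A <> m2.2 A).

Definition same_projection (m1 m2 : cmeasure) : Prop :=
  forall A : set (N.-tuple R), measurable A ->
    projection m1.1 A = projection m2.1 A /\ projection m1.2 A = projection m2.2 A.
End defs.

(* Main.v *)
Require Import Defs.
From HB Require Import structures.
From mathcomp Require Import all_boot all_order all_algebra.
From mathcomp Require Import all_classical all_reals all_analysis.
From mathcomp Require Import measurable_realfun.
From mathcomp Require Import ring lra.
Set Implicit Arguments. Unset Strict Implicit. Unset Printing Implicit Defensive.
Import Order.TTheory GRing.Theory Num.Theory.
Import numFieldNormedType.Exports.
Local Open Scope classical_set_scope.
Local Open Scope ring_scope.

Section pfm.
Local Open Scope ereal_scope.
Context d d' (T1 : measurableType d) (T2 : measurableType d') (R : realType).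
Variables (m : {measure set T1 -> \bar R}) (f : T1 -> T2).
Hypothesis mf : measurable_fun [set: T1] f.
Definition pfm (mf' : measurable_fun [set: T1] f) : set T2 -> \bar R := pushforward m f.
Local Notation pfm' := (pfm mf).
Let pfm0 : pfm' set0 = 0.
Proof. by rewrite /pfm /pushforward preimage_set0 measure0. Qed.
Let pfm_ge0 A : 0 <= pfm' A.
Proof. by rewrite /pfm /pushforward; exact: measure_ge0. Qed.
Let pfm_sigma_additive : semi_sigma_additive pfm'.
Proof.
move=> F mF tF mUF; rewrite /pfm /pushforward preimage_bigcup.
apply: measure_semi_sigma_additive.
- by move=> n; rewrite -[X in measurable X]setTI; exact: mf.
- apply/trivIsetP => /= i j _ _ ij; rewrite -preimage_setI.
  by move/trivIsetP : tF => /(_ _ _ _ _ ij) ->//; rewrite preimage_set0.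
- by rewrite -preimage_bigcup -[X in measurable X]setTI; exact: mf.
Qed.
HB.instance Definition _ := isMeasure.Build _ _ _ pfm' pfm0 pfm_ge0 pfm_sigma_additive.
End pfm.

Section pfc.
Local Open Scope ereal_scope.
Context d1 d2 (T1 : measurableType d1) (T2 : measurableType d2) (f : T1 -> T2).
Variables (R : realFieldType) (nu : {charge set T1 -> \bar R}).
Hypothesis mf : measurable_fun setT f.
Definition pfc (mf' : measurable_fun [set: T1] f) : set T2 -> \bar R := pushforward nu f.
Local Notation pfc' := (pfc mf).
Let pfc0 : pfc' set0 = 0.
Proof. by rewrite /pfc /pushforward preimage_set0 charge0. Qed.
Let pfc_finite A : measurable A -> pfc' A \is a fin_num.
Proof.
move=> mA; rewrite /pfc /pushforward; apply: fin_num_measure.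
by rewrite -[X in measurable X]setTI; exact: mf.
Qed.
Let pfc_sigma_additive : semi_sigma_additive pfc'.
Proof.
move=> F mF tF mUF; rewrite /pfc /pushforward preimage_bigcup.
apply: charge_semi_sigma_additive.
- by move=> n; rewrite -[X in measurable X]setTI; exact: mf.
- apply/trivIsetP => /= i j _ _ ij; rewrite -preimage_setI.
  by move/trivIsetP : tF => /(_ _ _ _ _ ij) ->//; rewrite preimage_set0.
- by rewrite -preimage_bigcup -[X in measurable X]setTI; exact: mf.
Qed.
HB.instance Definition _ := isCharge.Build _ _ _ pfc' pfc0 pfc_finite pfc_sigma_additive.
End pfc.

Section S.
Variable R : realType.
Local Notation mu := (@lebesgue_measure R).

Lemma leb_shift (t : R) (A : set R) : measurable A ->
  mu ((fun x => x + t) @^-1` A) = mu A.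
Proof.
have mt : measurable_fun [set: measurableTypeR R]
    ((fun x : R => x + t) : measurableTypeR R -> measurableTypeR R).
  by apply: measurable_funD => //; exact: measurable_cst.
move=> mA.
have -> : mu ((fun x => x + t) @^-1` A) = pfm mu mt A by [].
have := (@lebesgue_measure_unique R (pfm mu mt)).
move=> H; apply/esym; apply: H => //= _ [[a b]] _ <-.
rewrite /pfm /pushforward.
have -> : (fun x => x + t) @^-1` `]a, b]%classic = `](a - t), (b - t)]%classic.
  apply/seteqP; split => x /=; rewrite !in_itv/= ltrBlDr lerBrDr //.
rewrite !lebesgue_measure_itv/= !lte_fin ltrD2r; congr (if _ then _ else _).
by congr (_%:E); ring.
Qed.

Lemma mshift (t : R) (A : set R) : measurable A ->
  measurable ((fun x : R => x + t) @^-1` A).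
Proof.
have mt : measurable_fun [set: R] (fun x : R => x + t).
  by apply: measurable_funD => //; exact: measurable_cst.
by move=> mA; rewrite -[X in measurable X]setTI; exact: mt.
Qed.

Definition tau : R := pi *+ 2.
Lemma tau_gt0 : 0 < tau.
Proof. by rewrite /tau pmulrn_rgt0 // pi_gt0. Qed.

Definition Cm (F : set R) := mu (F `&` `[0, tau[%classic).

Section per.
Variable E : set R.
Hypothesis per : forall x, E x <-> E (x + tau).

Lemma per_nat (n : nat) x : E x <-> E (x + n%:R * tau).
Proof.
elim: n x => [|n IH] x; first by rewrite mul0r addr0.
have -> : x + n.+1%:R * tau = (x + n%:R * tau) + tau.
  by rewrite -[n.+1]addn1 natrD mulrDl mul1r addrA.
by rewrite -per.
Qed.

Lemma per_int (k : int) x : E x <-> E (x + k%:~R * tau).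
Proof.
case: k => n; first exact: per_nat.
rewrite (per_nat n.+1 (x + (Negz n)%:~R * tau)).
have -> : x + (Negz n)%:~R * tau + n.+1%:R * tau = x.
  by rewrite NegzE mulrNz -addrA -mulrDl addNr mul0r addr0.
by [].
Qed.

Hypothesis mE : measurable E.

Lemma Cm_shift0 (s : R) : 0 <= s < tau ->
  Cm ((fun x => x + s) @^-1` E) = Cm E.
Proof.
move=> /andP[s0 stau].
have mI (a b : R) : measurable (E `&` `[a, b[%classic).
  by apply: measurableI => //; exact: measurable_itv.
rewrite /Cm.
have -> : ((fun x => x + s) @^-1` E) `&` `[0, tau[%classic =
   ((fun x => x + s) @^-1` (E `&` `[s, tau[%classic)) `|`
   ((fun x => x + (s - tau)) @^-1` (E `&` `[0, s[%classic)).
  apply/seteqP; split => x /=.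
  - rewrite !in_itv/= => -[Ex /andP[x0 xt]].
    have [xs|xs] := ltP (x + s) tau.
      by left; split => //; rewrite lerDr x0.
    right; split; first by rewrite addrA per subrK.
    by apply/andP; split; lra.
  - rewrite !in_itv/= => -[[Ex /andP[sx xt]]|[Ex /andP[x0 xt]]].
      by split => //; apply/andP; split; lra.
    split; first by move: Ex; rewrite addrA per subrK.
    by apply/andP; split; lra.
rewrite measureU //; [ | exact: (mshift _ (mI _ _)) | exact: (mshift _ (mI _ _)) | ]; last first.
  apply/seteqP; split => x //= [[_]]; rewrite !in_itv/= => /andP[? ?] [_ /andP[? ?]]; lra.
have h1 := leb_shift s (mI s tau). have h2 := leb_shift (s - tau) (mI 0 s).
pose A1 := E `&` `[s, tau[%classic. pose A2 := E `&` `[0, s[%classic.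
transitivity (mu A1 + mu A2)%E; first by congr (_ + _)%E; [exact: h1|exact: h2].
have mA1 : measurable A1 by apply: mI.
have mA2 : measurable A2 by apply: mI.
have dA : A1 `&` A2 = set0.
  rewrite /A1 /A2; apply/seteqP; split => x //= [[_]]; rewrite !in_itv/= => /andP[? ?] [_ /andP[? ?]]; lra.
rewrite -measureU //.
rewrite /A1 /A2; congr (mu _); apply/seteqP; split => x /=.
- by case=> -[Ex]; rewrite !in_itv/= => /andP[? ?]; split => //; apply/andP; split; lra.
- rewrite !in_itv/= => -[Ex /andP[? ?]].
  by have [?|?] := ltP x s; [right|left]; split => //; apply/andP; split; lra.
Qed.

Lemma Cm_shift (s : R) : Cm ((fun x => x + s) @^-1` E) = Cm E.
Proof.
pose k := Num.floor (s / tau).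
have tp := tau_gt0.
have h1 : k%:~R * tau <= s.
  by rewrite -ler_pdivlMr // floor_le.
have h2 : s < (k + 1)%:~R * tau.
  by rewrite -ltr_pdivrMr // floorD1_gt.
rewrite -(Cm_shift0 (s := s - k%:~R * tau)); last first.
  apply/andP; split; first by rewrite subr_ge0.
  by move: h2; rewrite intrD mulrDl mul1r; lra.
congr Cm; apply/seteqP; split => x /=.
- by rewrite (per_int k (x + (s - _))) -addrA subrK.
- by rewrite (per_int k (x + (s - _))) -addrA subrK.
Qed.
End per.

Lemma mI0 : measurable (`[0, tau[%classic : set (measurableTypeR R)).
Proof. exact: measurable_itv. Qed.

Definition CmM := mrestr (@lebesgue_measure R) mI0.

Definition theta (a : measurableTypeR R) : (R * R)%type := (cos a, sin a).

Lemma mtheta : measurable_fun [set: measurableTypeR R] theta.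
Proof.
apply: measurable_fun_pair.
- exact: (continuous_measurable_fun (@continuous_cos R)).
- exact: (continuous_measurable_fun (@continuous_sin R)).
Qed.

Definition sigm := pfm CmM mtheta.
HB.instance Definition _ := Measure.on sigm.

Lemma sigmE F : sigm F = Cm (theta @^-1` F).
Proof. by []. Qed.

Lemma sigm_setT : sigm setT = (tau)%:E.
Proof.
rewrite sigmE /Cm preimage_setT setTI lebesgue_measure_itv/= lte_fin tau_gt0.
by rewrite -EFinD subr0.
Qed.

Lemma sigm_fin : fin_num_fun sigm.
Proof. apply: lty_fin_num_fun; change (sigm setT < +oo)%E; by rewrite sigm_setT ltry. Qed.

HB.instance Definition _ := Measure_isFinite.Build _ _ _ sigm sigm_fin.


Definition rot (s : R) (u : R * R) : (R * R)%type :=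
  (cos s * u.1 - sin s * u.2, sin s * u.1 + cos s * u.2).

Lemma mrot s : measurable_fun [set: (R * R)%type] (rot s).
Proof.
apply: measurable_fun_pair.
- apply: measurable_funB; apply: measurable_funM => //; exact: measurable_cst.
- apply: measurable_funD; apply: measurable_funM => //; exact: measurable_cst.
Qed.

Lemma rot_theta s a : rot s (theta a) = theta (a + s).
Proof. by rewrite /rot /theta /= cosD sinD; congr pair; ring. Qed.

Lemma theta_meas F : measurable F -> measurable (theta @^-1` F : set R).
Proof.
move=> mF; have := mtheta measurableT mF; rewrite setTI; exact.
Qed.

Lemma sigm_rot s F : measurable F -> sigm (rot s @^-1` F) = sigm F.
Proof.
move=> mF; rewrite !sigmE.
have -> : theta @^-1` (rot s @^-1` F) = (fun x => x + s) @^-1` (theta @^-1` F).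
  by apply/seteqP; split => x /=; rewrite rot_theta.
apply: Cm_shift; last exact: theta_meas.
by move=> x; rewrite /= /theta cosD2pi sinD2pi.
Qed.


Definition lam := (sigm \x sigm)%E.
HB.instance Definition _ := Measure.on lam.

Lemma lamX A B : measurable A -> measurable B -> lam (A `*` B) = (sigm A * sigm B)%E.
Proof. by move=> mA mB; rewrite /lam product_measure1E. Qed.

Lemma lam_fin : fin_num_fun lam.
Proof.
apply: lty_fin_num_fun; change (lam setT < +oo)%E.
rewrite -setXTT lamX // (_ : sigm _ = tau%:E); last exact: sigm_setT.
by rewrite -EFinM ltry.
Qed.

HB.instance Definition _ := Measure_isFinite.Build _ _ _ lam lam_fin.

Definition rr (s r : R) (p : (R * R) * (R * R)) := (rot s p.1, rot r p.2).

Lemma mrr s r : measurable_fun setT (rr s r).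
Proof.
apply: measurable_fun_pair.
- exact: (measurableT_comp (mrot s) measurable_fst).
- exact: (measurableT_comp (mrot r) measurable_snd).
Qed.

Lemma lam_rot s r X : measurable X -> lam (rr s r @^-1` X) = lam X.
Proof.
move=> mX.
have H : forall A B, measurable A -> measurable B ->
    pfm lam (mrr s r) (A `*` B) = (sigm A * sigm B)%E.
  move=> A B mA mB.
  change (lam ((rot s @^-1` A) `*` (rot r @^-1` B)) = (sigm A * sigm B)%E).
  rewrite lamX ?sigm_rot //.
  - by have := mrot s measurableT mA; rewrite setTI.
  - by have := mrot r measurableT mB; rewrite setTI.
have := @product_measure_unique _ _ _ _ R sigm sigm (pfm lam (mrr s r)) H X mX.
by move=> h; apply/esym; exact: h.
Qed.

End S.

Section Phi.
Variable R : realType.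
Variable N : nat.
Hypothesis hN : (4 <= N)%N.

Definition al : R := 3 / 5.
Definition be : R := 4 / 5.
Definition sg (b : bool) : R := if b then 1 else -1.

Definition xco (p : ((R * R) * (R * R))%type) (i : nat) : R :=
  match i with
  | 0 => al * p.1.1 | 1 => al * p.1.2 | 2 => be * p.2.1 | 3 => be * p.2.2
  | _ => 0 end.
Definition vco e1 e2 (p : ((R * R) * (R * R))%type) (i : nat) : R :=
  match i with
  | 0 => sg e1 * (al * - p.1.2) | 1 => sg e1 * (al * p.1.1)
  | 2 => sg e1 * (sg e2 * (be * - p.2.2)) | 3 => sg e1 * (sg e2 * (be * p.2.1))
  | _ => 0 end.

Definition Phi e1 e2 (p : ((R * R) * (R * R))%type) : (N.-tuple R * N.-tuple R)%type :=
  ([tuple xco p i | i < N], [tuple vco e1 e2 p i | i < N]).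

Lemma cos_sg b t : cos (sg b * t) = cos t.
Proof. by case: b; rewrite /sg ?mul1r // mulN1r cosN. Qed.
Lemma sin_sg b t : sin (sg b * t) = sg b * sin t.
Proof. by case: b; rewrite /sg ?mul1r // !mulN1r sinN. Qed.

Lemma flow_Phi t e1 e2 p :
  geodesic_flow t (Phi e1 e2 p) = Phi e1 e2 (rr (sg e1 * t) (sg e1 * sg e2 * t) p).
Proof.
rewrite /geodesic_flow /Phi /=; congr pair; apply: eq_from_tnth => i;
  rewrite !tnth_mktuple; case: i => [[|[|[|[|i]]]] Hi] /=;
  rewrite -?mulrA ?cos_sg ?sin_sg /sg; case: e1; case: e2; rewrite /=; ring.
Qed.

Lemma flip_Phi e1 e2 p : flip_dir (Phi e1 e2 p) = Phi (~~ e1) e2 p.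
Proof.
rewrite /flip_dir /Phi /=; congr pair; apply: eq_from_tnth => i;
  rewrite !tnth_mktuple; case: i => [[|[|[|[|i]]]] Hi] /=;
  rewrite /sg; case: e1; rewrite /=; ring.
Qed.

Lemma foot_Phi e1 e2 p : footpoint (Phi e1 e2 p) = [tuple xco p i | i < N].
Proof. by []. Qed.

Lemma mPhi e1 e2 : measurable_fun [set: ((R * R) * (R * R))%type] (Phi e1 e2).
Proof.
have m11 : measurable_fun [set: ((R * R) * (R * R))%type] (fun p => p.1.1).
  exact: (measurableT_comp measurable_fst measurable_fst).
have m12 : measurable_fun [set: ((R * R) * (R * R))%type] (fun p => p.1.2).
  exact: (measurableT_comp measurable_snd measurable_fst).
have m21 : measurable_fun [set: ((R * R) * (R * R))%type] (fun p => p.2.1).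
  exact: (measurableT_comp measurable_fst measurable_snd).
have m22 : measurable_fun [set: ((R * R) * (R * R))%type] (fun p => p.2.2).
  exact: (measurableT_comp measurable_snd measurable_snd).
have mc (c : R) : measurable_fun [set: ((R * R) * (R * R))%type] (fun _ => c).
  exact: measurable_cst.
apply: measurable_fun_pair; apply/measurable_fun_tnthP => i.
- rewrite (_ : _ \o _ = fun p => xco p i); last by apply/funext => p; rewrite /= tnth_mktuple.
  case: i => [[|[|[|[|i]]]] Hi] /=; rewrite /xco; try exact: measurable_funM.
  exact: mc.
- rewrite (_ : _ \o _ = fun p => vco e1 e2 p i); last by apply/funext => p; rewrite /= tnth_mktuple.
  case: i => [[|[|[|[|i]]]] Hi] /=; rewrite /vco;
    repeat (apply: measurable_funM => //); try exact: measurable_funN.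
  exact: mc.
Qed.


Lemma sum4 (F : nat -> R) : (forall k, (4 <= k)%N -> F k = 0) ->
  \sum_(i < N) F i = F 0%N + F 1%N + F 2%N + F 3%N.
Proof.
move=> F0.
rewrite -(big_mkord xpredT F) (@big_cat_nat _ _ _ 4) //=.
have -> : \sum_(4 <= i < N) F i = 0.
  rewrite big_nat_cond big1 // => i /andP[/andP[Hi _] _]; exact: F0.
by rewrite addr0 !big_nat_recl // big_geq // addr0 !addrA.
Qed.

Definition circ : set (R * R) := [set u | u.1 ^+ 2 + u.2 ^+ 2 = 1].

Lemma Phi_UTB e1 e2 p : circ p.1 -> circ p.2 ->
  unit_tangent_bundle (Phi e1 e2 p).
Proof.
rewrite /circ /= => hu hw.
rewrite /unit_tangent_bundle /edot /Phi /=.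
split; [|split].
- under eq_bigr do rewrite !tnth_mktuple.
  rewrite (@sum4 (fun k => xco p k * xco p k)); last by case=> [|[|[|[|k]]]] //= _; rewrite mulr0.
  rewrite /= /al /be; lra.
- under eq_bigr do rewrite !tnth_mktuple.
  rewrite (@sum4 (fun k => vco e1 e2 p k * vco e1 e2 p k)); last by case=> [|[|[|[|k]]]] //= _; rewrite mulr0.
  rewrite /= /al /be /sg; case: e1; case: e2; lra.
- under eq_bigr do rewrite !tnth_mktuple.
  rewrite (@sum4 (fun k => xco p k * vco e1 e2 p k)); last by case=> [|[|[|[|k]]]] //= _; rewrite mulr0.
  rewrite /= /al /be /sg; case: e1; case: e2; lra.
Qed.

End Phi.

Section Main.
Variable R : realType.
Variable N : nat.
Hypothesis hN : (4 <= N)%N.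
Local Notation T := (N.-tuple R * N.-tuple R)%type.

Definition kap := charge_of_finite_measure (@lam R).
Definition nu e1 e2 : {charge set T -> \bar R} := pfc kap (@mPhi R N e1 e2).

Lemma nuE e1 e2 A : nu e1 e2 A = lam (Phi N e1 e2 @^-1` A).
Proof. by []. Qed.

Lemma mPhiA e1 e2 (A : set T) : measurable A -> measurable (Phi N e1 e2 @^-1` A).
Proof. by move=> mA; have := @mPhi R N e1 e2 measurableT A mA; rewrite setTI. Qed.

Lemma nu_flow e1 e2 t A : measurable A ->
  nu e1 e2 (geodesic_flow t @^-1` A) = nu e1 e2 A.
Proof.
move=> mA; rewrite !nuE.
have -> : Phi N e1 e2 @^-1` (geodesic_flow t @^-1` A) =
    rr (@sg R e1 * t) (@sg R e1 * @sg R e2 * t) @^-1` (Phi N e1 e2 @^-1` A).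
  by apply/seteqP; split => p /=; rewrite flow_Phi.
by rewrite lam_rot //; exact: mPhiA.
Qed.

Lemma nu_flip e1 e2 A : nu e1 e2 (@flip_dir R N @^-1` A) = nu (~~ e1) e2 A.
Proof.
rewrite !nuE; congr lam; apply/seteqP; split => p /=; by rewrite flip_Phi.
Qed.

Lemma nu_foot e1 e2 B : nu e1 e2 (@footpoint R N @^-1` B) = nu true true (@footpoint R N @^-1` B).
Proof. by rewrite !nuE. Qed.


Lemma mcirc : measurable (@circ R).
Proof.
have mf : measurable_fun [set: (R * R)%type] (fun u : R * R => u.1 ^+ 2 + u.2 ^+ 2).
  by apply: measurable_funD; apply: measurable_funX.
have := mf measurableT [set 1] (measurable_set1 _).
by rewrite setTI.
Qed.

Lemma sigm_ncirc : sigm (~` (@circ R)) = 0%E.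
Proof.
rewrite sigmE (_ : @theta R @^-1` _ = set0); first by rewrite /Cm set0I measure0.
by apply/seteqP; split => x //=; rewrite /circ /= cos2Dsin2.
Qed.

Lemma lam_ncirc (X : set ((R * R) * (R * R))%type) : measurable X ->
  X `<=` ~` ((@circ R) `*` (@circ R)) -> lam X = 0%E.
Proof.
move=> mX sX.
have mnc : measurable (~` (@circ R)) by apply: measurableC; exact: mcirc.
have mD1 : measurable (~` (@circ R) `*` [set: (R * R)%type]) by apply: measurableX.
have mD2 : measurable ([set: (R * R)%type] `*` ~` (@circ R)) by apply: measurableX.
apply: (subset_measure0 mX (measurableU _ _ mD1 mD2)).
  move=> p /sX /=; rewrite /setC /= => H.
  by case: (pselect (circ p.1)) => h1; [right; split=> // h2; apply: H|left].
apply/eqP; rewrite eq_le measure_ge0 andbT.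
apply: (le_trans (measureU2 _ mD1 mD2)).
change (lam (~` (@circ R) `*` [set: (R * R)%type]) +
   lam ([set: (R * R)%type] `*` ~` (@circ R)) <= 0)%E.
by rewrite !lamX // sigm_ncirc mul0e mule0 adde0.
Qed.


Lemma nu_supp e1 e2 A : measurable A -> A `&` @unit_tangent_bundle R N = set0 ->
  nu e1 e2 A = 0%E.
Proof.
move=> mA A0; rewrite nuE; apply: lam_ncirc; first exact: mPhiA.
move=> p /= Ap [c1 c2].
have : (A `&` @unit_tangent_bundle R N) (Phi N e1 e2 p).
  by split => //; exact: Phi_UTB.
by rewrite A0.
Qed.

Let i0 : 'I_N := Ordinal (leq_trans (isT : (1 <= 4)%N) hN).
Let i1 : 'I_N := Ordinal (leq_trans (isT : (2 <= 4)%N) hN).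
Let i2 : 'I_N := Ordinal (leq_trans (isT : (3 <= 4)%N) hN).
Let i3 : 'I_N := Ordinal hN.

Definition fA (q : T) : R := tnth q.1 i1 * tnth q.2 i0 * (tnth q.1 i3 * tnth q.2 i2).
Definition A0 : set T := [set q | 0 < fA q].

Lemma mA0 : measurable A0.
Proof.
have mt (i : 'I_N) : measurable_fun [set: T] (fun q : T => tnth q.1 i).
  exact: (measurableT_comp (measurable_tnth i) measurable_fst).
have mt' (i : 'I_N) : measurable_fun [set: T] (fun q : T => tnth q.2 i).
  exact: (measurableT_comp (measurable_tnth i) measurable_snd).
have mf : measurable_fun [set: T] fA.
  by apply: measurable_funM; apply: measurable_funM.
have := mf measurableT `]0, +oo[%classic (measurable_itv _).
rewrite setTI (_ : fA @^-1` _ = A0) //.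
by apply/seteqP; split => q /=; rewrite in_itv/= andbT.
Qed.

Lemma fA_Phi e1 e2 p : fA (Phi N e1 e2 p) = sg R e2 * (al R * be R * p.1.2 * p.2.2) ^+ 2.
Proof. rewrite /fA /= !tnth_mktuple /= /sg; case: e1; case: e2; ring. Qed.

Lemma nu_A0_false e1 : nu e1 false A0 = 0%E.
Proof.
rewrite nuE (_ : _ @^-1` _ = set0) ?measure0 //.
apply/seteqP; split => p //=; rewrite /A0 /= fA_Phi /sg /= mulN1r oppr_gt0.
by rewrite ltNge sqr_ge0.
Qed.

Lemma nu_A0_true e1 : (1 <= nu e1 true A0)%E.
Proof.
pose S : set (R * R) := [set u | 0 < u.2].
have mS : measurable S.
  have := @measurable_snd _ _ R R measurableT `]0, +oo[%classic (measurable_itv _).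
  rewrite setTI (_ : snd @^-1` _ = S) //.
  by apply/seteqP; split => q /=; rewrite in_itv/= andbT.
have sS : (1 <= sigm S)%E.
  rewrite sigmE /Cm.
  have -> : (1%E : \bar R) = lebesgue_measure (`]0, 1[%classic : set R).
    by rewrite lebesgue_measure_itv/= lte_fin ltr01 -EFinD subr0.
  apply: le_measure; rewrite ?inE.
  - exact: measurable_itv.
  - apply: measurableI; last exact: measurable_itv.
    exact: theta_meas.
  - move=> a /=; rewrite in_itv/= => /andP[a0 a1]; split.
      rewrite /S /theta /=; apply: sin_gt0_pi; rewrite a0 /=.
      by have := pi_ge2 R; lra.
    rewrite in_itv/= (ltW a0) /= /tau; have := pi_ge2 R; lra.
have h : (lam (S `*` S) <= nu e1 true A0)%E.
  rewrite nuE; apply: le_measure; rewrite ?inE.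
  - exact: measurableX.
  - exact: (mPhiA _ _ mA0).
  - move=> p [/= h1 h2]; rewrite /A0 /= fA_Phi /sg /= mul1r; apply: exprn_gt0.
    have hab : 0 < al R * be R by rewrite /al /be; lra.
    by rewrite mulr_gt0 // mulr_gt0.
apply: le_trans h; rewrite lamX //.
rewrite -[1%E]mule1; apply: lee_pmul => //.
Qed.


Definition muc : {charge set T -> \bar R} :=
  cadd (cadd (nu true true) (nu false true)) (copp (cadd (nu true false) (nu false false))).

Lemma mucE A : muc A =
  ((nu true true A + nu false true A) + - (nu true false A + nu false false A))%E.
Proof. by []. Qed.


Lemma muc_supp : supported_on_UTB muc.
Proof. by move=> A mA A0; rewrite mucE !nu_supp // adde0 oppe0 adde0. Qed.


Lemma muc_even : even_measure muc.
Proof.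
move=> A mA; rewrite !mucE.
have f1 := nu_flip true true A. have f2 := nu_flip false true A.
have f3 := nu_flip true false A. have f4 := nu_flip false false A.

rewrite f1 f2 f3 f4.
rewrite [X in (X - _)%E]addeC [X in (_ - X)%E]addeC.
by [].
Qed.

Lemma muc_flow : flow_invariant muc.
Proof.
move=> t A mA; rewrite !mucE.
have f1 := nu_flow true true t mA. have f2 := nu_flow false true t mA.
have f3 := nu_flow true false t mA. have f4 := nu_flow false false t mA.
by rewrite f1 f2 f3 f4.
Qed.


Lemma muc_nz : exists A, measurable A /\ muc A <> 0%E.
Proof.
exists A0; split; first exact: mA0.
rewrite mucE.
have f3 := nu_A0_false true. have f4 := nu_A0_false false.
rewrite f3 f4 adde0 oppe0 adde0 => h.
have h1 := nu_A0_true true; have h2 := nu_A0_true false.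
have : (1 <= nu true true A0 + nu false true A0)%E.
  have h3 : (0 <= nu false true A0)%E by apply: le_trans h2.
  by apply: (le_trans h1); rewrite leeDl.
by rewrite h leNgt lte01.
Qed.

Lemma muc_proj B : measurable B -> projection muc B = 0%E.
Proof.
move=> mB; rewrite /projection mucE.
have f2 := nu_foot true false B. have f3 := nu_foot false false B.
have f4 := nu_foot false true B.
rewrite f2 f3 f4.
have mF : measurable (@footpoint R N @^-1` B).
  have mfst : measurable_fun [set: T] (@footpoint R N) := measurable_fst.
  by have := mfst measurableT B mB; rewrite setTI.
have fin : nu true true (@footpoint R N @^-1` B) \is a fin_num.
  exact: fin_num_measure.
rewrite subee //.
by rewrite fin_numD fin.
Qed.

End Main.

Lemma hN4 (j : nat) : (2 <= j)%N -> (4 <= (2 * j).+1)%N.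
Proof.
move=> hj; rewrite ltnS; apply: (@leq_trans 4); first by [].
by rewrite -[4%N]/(2 * 2)%N leq_mul2l hj orbT.
Qed.

Unset Implicit Arguments.

Theorem theorem3 (R : realType) (j : nat) (hj : (2 <= j)%N) :
  (exists m1 m2 : cmeasure R (2 * j)%N.+1,
      even_invariant_UTB_cmeasure m1 /\ even_invariant_UTB_cmeasure m2 /\
      cmeasure_distinct m1 m2 /\ same_projection m1 m2)
  /\
  (exists mu : {charge set (((2 * j)%N.+1).-tuple R * ((2 * j)%N.+1).-tuple R)%type -> \bar R},
      even_invariant_UTB_measure mu /\
      (exists A, measurable A /\ mu A <> 0%E) /\
      (forall A : set (((2 * j)%N.+1).-tuple R), measurable A -> projection mu A = 0%E)).
Proof.
have hN := hN4 hj.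
pose z : {charge set (((2 * j)%N.+1).-tuple R * ((2 * j)%N.+1).-tuple R)%type -> \bar R} := czero.
have hz : even_invariant_UTB_measure z.
  by split; [|split] => *.
split.
- exists (muc R _, z), (z, z).
  split; first by split => //; split; [exact: (muc_supp hN)|split; [exact: muc_even|exact: muc_flow]].
  split; first by split.
  split.
    have [A [mA hA]] := muc_nz R hN.
    by exists A; split => //; left.
  by move=> A mA; split => //; exact: muc_proj.
- exists (muc R _); split; first by split; [exact: (muc_supp hN)|split; [exact: muc_even|exact: muc_flow]].
  split; first exact: muc_nz.
  exact: muc_proj.
Qed.
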